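(* Let $n\geq 3$. There exist $a>1$, $p,q\in\mathbb{R}$, $\hat\theta\in\mathbb{R}$, angles $\theta_{\min}\le\theta_0<\theta_{\max}$, and a curve $\gamma_\infty(\theta)=(r_\infty(\theta)\cos\theta,r_\infty(\theta)\sin\theta)$, $\theta\in[\theta_{\min},\theta_{\max}]$, lying on a level curve of $\mathrm{Im}(e^{-i\hat\theta}z^n)$ (hence a stationary solution, i.e. $\frac{2r_\infty'^2-r_\infty r_\infty''+r_\infty^2}{r_\infty'^2+r_\infty^2}+(n-1)=0$), such that $\gamma_\infty(\theta_0)=(1,q)$ with $\gamma_\infty'(\theta_0)$ vertical (so the class $[\alpha]=p[H]-q[E]$ is semi-stable with respect to $[\omega]=a[H]-[E]$ on the blowup of $\mathbb{P}^n$ at a point, destabilized by the exceptional divisor $E$), $\gamma_\infty(\theta_{\max})=(a,p)$, $1\le r_\infty\cos\theta\le a$ with $r_\infty(\theta_{\min})\cos\theta_{\min}=r_\infty(\theta_{\max})\cos\theta_{\max}=a$, and $$r_\infty'\geq 0,\qquad \frac{r_\infty'}{r_\infty}\le 2\tan\theta\qquad\text{on }[\theta_{\min},\theta_{\max}].$$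
   Context: Here $z=x+iy$ is the complex coordinate on $\mathbb{R}^2$. On the blowup $X$ of $\mathbb{P}^n$ at a point, $H$ denotes the pullback of a hyperplane and $E$ the exceptional divisor; $[\omega]=a[H]-[E]$ with $a>1$ is a K\''ahler class. Semi-stability refers to the condition $\pi>\arg Z(V)>\arg Z(X)$ with $Z(V)=-\int_V e^{-i\omega+\alpha}$ (only the degree-$\dim V$ term integrated) holding only non-strictly, with $E$ the subvariety where strictness fails; for Calabi-symmetric data this corresponds to the level curve of $\mathrm{Im}(e^{-i\hat\theta}z^n)$ through $(1,q)$ having vertical tangent there. *)

(* Defs.v *)
From Stdlib Require Import Reals.
From Coquelicot Require Import Coquelicot.
Open Scope R_scope.

Definition cexp_i (t : R) : C := (cos t, sin t).

Definition polar_pt (r : R -> R) (t : R) : C := (r t * cos t, r t * sin t).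

Definition level_fun (n : nat) (thhat : R) (z : C) : R :=
  Im (Cmult (cexp_i (- thhat)) (Cpow z n)).

Definition stationary_ode (n : nat) (r : R -> R) (t : R) : Prop :=
  (2 * (Derive r t)^2 - r t * Derive (Derive r) t + (r t)^2)
    / ((Derive r t)^2 + (r t)^2) + (INR n - 1) = 0.

(* Main.v *)
Require Import Defs.
From Stdlib Require Import Reals Lra Lia.
From Coquelicot Require Import Coquelicot.
Open Scope R_scope.
Definition t0 : R := 1/2.
Definition Bf (n:nat) (t:R) : R := t0 + INR n * (t - t0).
Definition Mf (n:nat) : R := 1 / (cos t0 * exp (- ln (cos t0) / INR n)).
Definition rf (n:nat) (t:R) : R := Mf n * exp (- ln (cos (Bf n t)) / INR n).

Lemma INR_pos n : (0 < n)%nat -> 0 < INR n.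
Proof. intros; apply lt_0_INR; lia. Qed.

Lemma rf_der n t : (0 < n)%nat -> 0 < cos (Bf n t) -> is_derive (rf n) t (rf n t * tan (Bf n t)).
Proof. intros Hn Hc. pose proof (INR_pos n Hn). unfold rf, Bf in *. auto_derive.
- replace (t + - t0) with (t - t0) by ring. exact Hc.
- unfold tan, Rminus, Rdiv in *. field. split; lra.
Qed.

Lemma rf_Derive n t : (0 < n)%nat -> 0 < cos (Bf n t) -> Derive (rf n) t = rf n t * tan (Bf n t).
Proof. intros; apply is_derive_unique, rf_der; auto. Qed.

Lemma loc_pos (f : R -> R) t : continuous f t -> 0 < f t -> locally t (fun s => 0 < f s).
Proof.
  intros Hc Hp. assert (H := proj1 (filterlim_locally f (f t)) Hc (mkposreal _ Hp)).
  eapply filter_imp; [| exact H]. intros s Hs. simpl in Hs. change (Rabs (f s - f t) < f t) in Hs.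
  apply Rabs_def2 in Hs. lra.
Qed.

Lemma cosB_cont n t : continuous (fun s => cos (Bf n s)) t.
Proof. apply (ex_derive_continuous (K:=R_AbsRing) (fun s => cos (Bf n s))). unfold Bf. auto_derive. auto. Qed.

Lemma rf_der2 n t : (0 < n)%nat -> 0 < cos (Bf n t) ->
  is_derive (Derive (rf n)) t (rf n t * (tan (Bf n t) ^ 2 + INR n / cos (Bf n t) ^ 2)).
Proof.
  intros Hn Hc. pose proof (INR_pos n Hn).
  apply is_derive_ext_loc with (f := fun s => rf n s * (sin (Bf n s) / cos (Bf n s))).
  - eapply filter_imp; [| exact (loc_pos _ t (cosB_cont n t) Hc)]. intros s Hs.
    rewrite rf_Derive; auto.
  - unfold rf, Bf in *. auto_derive.
    + replace (t + - t0) with (t - t0) by ring. repeat split; lra.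
    + unfold tan, Rminus, Rdiv in *.
      set (u := t0 + INR n * (t + - t0)) in *.
      assert (Hsc : sin u * sin u + cos u * cos u = 1) by (pose proof (sin2_cos2 u) as HH; unfold Rsqr in HH; exact HH).
      replace (INR n * / cos u ^ 2) with (INR n * (sin u * sin u + cos u * cos u) * / cos u ^ 2) by (rewrite Hsc; ring).
      field. lra.
Qed.

Lemma Cpow_polar (rho t : R) (k : nat) :
  Cpow (rho * cos t, rho * sin t) k = (rho ^ k * cos (INR k * t), rho ^ k * sin (INR k * t)).
Proof.
  induction k as [|k IH].
  - simpl. rewrite Rmult_0_l, cos_0, sin_0. unfold RtoC. f_equal; ring.
  - simpl Cpow. rewrite IH. rewrite S_INR. unfold Cmult. simpl.
    rewrite Rmult_plus_distr_r, Rmult_1_l, cos_plus, sin_plus.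
    f_equal; ring.
Qed.

Lemma exp_pow_INR (y : R) (k : nat) : exp y ^ k = exp (INR k * y).
Proof.
  induction k as [|k IH].
  - simpl. rewrite Rmult_0_l, exp_0. reflexivity.
  - rewrite S_INR. simpl. rewrite IH, <- exp_plus. f_equal. ring.
Qed.

Definition thh (n : nat) : R := (INR n - 1) * t0 - PI / 2.

Lemma level_const n t : (0 < n)%nat -> 0 < cos (Bf n t) ->
  Im (Cmult (cos (- thh n), sin (- thh n)) (Cpow (rf n t * cos t, rf n t * sin t) n)) = Mf n ^ n.
Proof.
  intros Hn Hc. pose proof (INR_pos n Hn).
  rewrite Cpow_polar. simpl.
  replace (cos (- thh n) * (rf n t ^ n * sin (INR n * t)) + sin (- thh n) * (rf n t ^ n * cos (INR n * t)))
    with (rf n t ^ n * sin (INR n * t + - thh n)) by (rewrite sin_plus; ring).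
  replace (INR n * t + - thh n) with (PI/2 + Bf n t) by (unfold thh, Bf; ring).
  rewrite <- cos_sin.
  unfold rf. rewrite Rpow_mult_distr, exp_pow_INR.
  replace (INR n * (- ln (cos (Bf n t)) / INR n)) with (- ln (cos (Bf n t))) by (field; lra).
  rewrite exp_Ropp, exp_ln by exact Hc. field. lra.
Qed.

Definition xf n t := rf n t * cos t.
Definition dxf n t := rf n t * cos t * (tan (Bf n t) - tan t).
Definition Lf n := t0 - t0 / INR n.
Definition Tf n := t0 + 1 / (2 * INR n).

Lemma rf_pos n t : 0 < rf n t.
Proof.
  unfold rf, Mf. apply Rmult_lt_0_compat; [|apply exp_pos].
  unfold Rdiv. rewrite Rmult_1_l. apply Rinv_0_lt_compat. apply Rmult_lt_0_compat; [|apply exp_pos].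
  apply cos_gt_0; unfold t0; pose proof PI2_1; lra.
Qed.

Lemma xf_der n t : (0 < n)%nat -> 0 < cos (Bf n t) -> 0 < cos t -> is_derive (xf n) t (dxf n t).
Proof.
  intros Hn Hc Hct.
  assert (H1 := rf_der n t Hn Hc).
  assert (H2 : is_derive cos t (- sin t)) by (auto_derive; auto; ring).
  assert (H3 := is_derive_mult (rf n) cos t _ _ H1 H2 (fun a b => Rmult_comm a b)).
  unfold xf. simpl in H3.
  replace (dxf n t) with (plus (mult (rf n t * tan (Bf n t)) (cos t)) (mult (rf n t) (- sin t))).
  exact H3.
  unfold plus, mult; simpl. unfold dxf, tan. field. split; lra.
Qed.

Lemma range n t : (3 <= n)%nat -> Lf n <= t <= Tf n ->
  0 <= Bf n t <= 1 /\ 1/3 <= t <= 2/3 /\ 0 < cos (Bf n t) /\ 0 < cos t.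
Proof.
  intros Hn [H1 H2].
  assert (HN : 3 <= INR n) by (replace 3 with (INR 3) by (simpl; ring); apply le_INR; lia).
  unfold Lf, Tf, Bf, t0 in *.
  set (N := INR n) in *.
  assert (Hk : N * (1/2 / N) = 1/2) by (field; lra).
  assert (Hk' : N * (1 / (2*N)) = 1/2) by (field; lra).
  assert (Hk1 : 0 < 1/2/N) by (apply Rdiv_lt_0_compat; lra).
  assert (Hk2 : 0 < 1/(2*N)) by (apply Rdiv_lt_0_compat; lra).
  assert (Hk3 : 1/2/N <= 1/6) by (apply (Rmult_le_reg_l N); [lra|]; rewrite Hk; lra).
  assert (Hk4 : 1/(2*N) <= 1/6) by (apply (Rmult_le_reg_l N); [lra|]; rewrite Hk'; lra).
  assert (0 <= 1/2 + N*(t - 1/2) <= 1) by nra.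
  pose proof PI2_1.
  repeat split; try lra; apply cos_gt_0; lra.
Qed.

Lemma tan_cmp n t : (3 <= n)%nat -> Lf n <= t <= Tf n ->
  (t < t0 -> tan (Bf n t) < tan t) /\ (t0 < t -> tan t < tan (Bf n t)).
Proof.
  intros Hn Ht. destruct (range n t Hn Ht) as [HB [Ht' _]].
  assert (HN : 3 <= INR n) by (replace 3 with (INR 3) by (simpl; ring); apply le_INR; lia).
  pose proof PI2_1.
  assert (E : Bf n t - t = (INR n - 1) * (t - t0)) by (unfold Bf; ring).
  split; intro Hh; apply tan_increasing; try lra; nra.
Qed.

Lemma dxf_sign n t : (3 <= n)%nat -> Lf n <= t <= Tf n ->
  (t < t0 -> dxf n t < 0) /\ (t0 < t -> 0 < dxf n t) /\ (t = t0 -> dxf n t = 0).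
Proof.
  intros Hn Ht. destruct (range n t Hn Ht) as [_ [_ [_ Hc]]].
  destruct (tan_cmp n t Hn Ht) as [T1 T2].
  pose proof (rf_pos n t).
  assert (0 < rf n t * cos t) by (apply Rmult_lt_0_compat; lra).
  unfold dxf. repeat split; intro H'.
  - specialize (T1 H'). nra.
  - specialize (T2 H'). nra.
  - subst t. unfold Bf. replace (t0 + INR n * (t0 - t0)) with t0 by ring. ring.
Qed.

Lemma xf_cont n t : (3 <= n)%nat -> Lf n <= t <= Tf n -> continuity_pt (xf n) t.
Proof.
  intros Hn Ht. destruct (range n t Hn Ht) as [_ [_ [Hc Hct]]].
  apply continuity_pt_filterlim.
  apply (ex_derive_continuous (K:=R_AbsRing) (xf n)). eexists. apply xf_der; auto. lia.
Qed.

Lemma mvt n u v : (3 <= n)%nat -> Lf n <= u -> u < v -> v <= Tf n ->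
  exists c, u <= c <= v /\ xf n v - xf n u = dxf n c * (v - u).
Proof.
  intros Hn H1 H2 H3.
  assert (Hm := MVT_gen (xf n) u v (dxf n)). cbv zeta in Hm.
  rewrite Rmin_left, Rmax_right in Hm by lra.
  apply Hm.
  - intros x Hx. destruct (range n x Hn (conj (Rlt_le _ _ (Rle_lt_trans _ _ _ H1 (proj1 Hx))) (Rlt_le _ _ (Rlt_le_trans _ _ _ (proj2 Hx) H3)))) as [_ [_ [Hc Hct]]].
    apply xf_der; auto. lia.
  - intros x Hx. apply xf_cont; auto. lra.
Qed.

Lemma mono_dec n u v : (3 <= n)%nat -> Lf n <= u -> u <= v -> v <= t0 -> xf n v <= xf n u.
Proof.
  intros Hn H1 H2 H3. destruct (Rle_lt_or_eq_dec _ _ H2) as [H|H]; [|subst; lra].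
  assert (t0 < Tf n) by (unfold Tf; assert (0 < INR n) by (apply INR_pos; lia); assert (0 < 1/(2*INR n)) by (apply Rdiv_lt_0_compat; lra); lra).
  destruct (mvt n u v Hn H1 H ltac:(lra)) as [c [Hc E]].
  destruct (Rle_lt_or_eq_dec c t0 ltac:(lra)) as [Hc'|Hc'].
  - destruct (dxf_sign n c Hn ltac:(lra)) as [S _]. specialize (S Hc'). nra.
  - destruct (dxf_sign n c Hn ltac:(lra)) as [_ [_ S]]. specialize (S Hc'). nra.
Qed.

Lemma mono_inc n u v : (3 <= n)%nat -> t0 <= u -> u <= v -> v <= Tf n -> xf n u <= xf n v.
Proof.
  intros Hn H1 H2 H3. destruct (Rle_lt_or_eq_dec _ _ H2) as [H|H]; [|subst; lra].
  assert (Lf n < t0) by (unfold Lf; assert (0 < INR n) by (apply INR_pos; lia); assert (0 < t0/INR n) by (apply Rdiv_lt_0_compat; unfold t0; lra); lra).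
  destruct (mvt n u v Hn ltac:(lra) H H3) as [c [Hc E]].
  destruct (Rle_lt_or_eq_dec t0 c ltac:(lra)) as [Hc'|Hc'].
  - destruct (dxf_sign n c Hn ltac:(lra)) as [_ [S _]]. specialize (S Hc'). nra.
  - destruct (dxf_sign n c Hn ltac:(lra)) as [_ [_ S]]. specialize (S (eq_sym Hc')). nra.
Qed.

Lemma strict_dec n : (3 <= n)%nat -> xf n t0 < xf n (Lf n).
Proof.
  intros Hn.
  assert (Lf n < t0) by (unfold Lf; assert (0 < INR n) by (apply INR_pos; lia); assert (0 < t0/INR n) by (apply Rdiv_lt_0_compat; unfold t0; lra); lra).
  assert (t0 < Tf n) by (unfold Tf; assert (0 < INR n) by (apply INR_pos; lia); assert (0 < 1/(2*INR n)) by (apply Rdiv_lt_0_compat; lra); lra).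
  set (m := (Lf n + t0)/2).
  destruct (mvt n (Lf n) m Hn ltac:(lra) ltac:(unfold m; lra) ltac:(unfold m; lra)) as [c [Hc E]].
  destruct (dxf_sign n c Hn ltac:(unfold m in *; lra)) as [S _]. specialize (S ltac:(unfold m in *; lra)).
  assert (xf n t0 <= xf n m) by (apply mono_dec; unfold m; auto; lra).
  unfold m in *. nra.
Qed.

Lemma strict_inc n v : (3 <= n)%nat -> t0 < v -> v <= Tf n -> xf n t0 < xf n v.
Proof.
  intros Hn H1 H2.
  assert (Lf n < t0) by (unfold Lf; assert (0 < INR n) by (apply INR_pos; lia); assert (0 < t0/INR n) by (apply Rdiv_lt_0_compat; unfold t0; lra); lra).
  set (m := (v + t0)/2).
  destruct (mvt n m v Hn ltac:(unfold m; lra) ltac:(unfold m; lra) H2) as [c [Hc E]].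
  destruct (dxf_sign n c Hn ltac:(unfold m in *; lra)) as [_ [S _]]. specialize (S ltac:(unfold m in *; lra)).
  assert (xf n t0 <= xf n m) by (apply mono_inc; unfold m; auto; lra).
  unfold m in *. nra.
Qed.

Lemma xf_t0 n : (0 < n)%nat -> xf n t0 = 1.
Proof.
  intros Hn. pose proof (INR_pos n Hn).
  assert (0 < cos t0) by (apply cos_gt_0; unfold t0; pose proof PI2_1; lra).
  pose proof (exp_pos (- ln (cos t0) / INR n)).
  unfold xf, rf, Mf, Bf. replace (t0 + INR n * (t0 - t0)) with t0 by ring. field. lra.
Qed.

Lemma ode_alg r S C N : 0 < r -> 0 < C -> S * S + C * C = 1 ->
  (2 * (r * (S / C)) ^ 2 - r * (r * ((S / C) ^ 2 + N / C ^ 2)) + r ^ 2) /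
  ((r * (S / C)) ^ 2 + r ^ 2) + (N - 1) = 0.
Proof.
  intros Hr HC H.
  replace (N / C ^ 2) with (N * ((S / C) ^ 2 + 1)) by (assert (E : (S/C)^2 + 1 = (S*S + C*C)/C^2) by (field; lra); rewrite E, H; field; lra).
  set (T := S / C).
  assert (0 < (r * T) ^ 2 + r ^ 2) by (assert (0 < r^2) by (apply pow_lt; lra); assert (0 <= (r * T) ^ 2) by (apply pow2_ge_0); lra).
  field. lra.
Qed.

Theorem lemma5p2 (n : nat) (hn : (3 <= n)%nat) :
  exists (a p q thhat thmin th0 thmax : R) (r : R -> R),
    1 < a /\ thmin <= th0 /\ th0 < thmax /\
    (* r is positive and twice differentiable on [thmin, thmax] *)
    (forall t, thmin <= t <= thmax ->
       0 < r t /\ ex_derive r t /\ ex_derive (Derive r) t) /\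
    (* the curve lies on a level curve of Im(e^{-i thhat} z^n) *)
    (exists c : R, forall t, thmin <= t <= thmax ->
       level_fun n thhat (polar_pt r t) = c) /\
    (* hence it is a stationary solution *)
    (forall t, thmin <= t <= thmax -> stationary_ode n r t) /\
    (* gamma(th0) = (1, q) with vertical tangent there *)
    r th0 * cos th0 = 1 /\ r th0 * sin th0 = q /\
    Derive r th0 * cos th0 - r th0 * sin th0 = 0 /\
    Derive r th0 * sin th0 + r th0 * cos th0 <> 0 /\
    (* gamma(thmax) = (a, p) *)
    r thmax * cos thmax = a /\ r thmax * sin thmax = p /\
    r thmin * cos thmin = a /\
    (forall t, thmin <= t <= thmax ->
       1 <= r t * cos t <= a /\
       0 <= Derive r t /\
       Derive r t / r t <= 2 * tan t).
Proof.
  assert (Hn0 : (0 < n)%nat) by lia.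
  pose proof (INR_pos n Hn0) as HN.
  pose proof PI2_1 as HPI.
  assert (HLt : Lf n < t0) by (unfold Lf; assert (0 < t0/INR n) by (apply Rdiv_lt_0_compat; unfold t0; lra); lra).
  assert (HTt : t0 < Tf n) by (unfold Tf; assert (0 < 1/(2*INR n)) by (apply Rdiv_lt_0_compat; lra); lra).
  assert (Hx0 := xf_t0 n Hn0).
  assert (HxL := strict_dec n hn).
  set (xL := xf n (Lf n)) in *.
  assert (Hct0 : 0 < cos t0) by (apply cos_gt_0; unfold t0; lra).
  assert (HcB0 : 0 < cos (Bf n t0)) by (unfold Bf; replace (t0 + INR n * (t0 - t0)) with t0 by ring; exact Hct0).
  assert (Hloc1 : locally t0 (fun t => 0 < xL - xf n t)).
  { apply loc_pos. apply (ex_derive_continuous (K:=R_AbsRing) (fun t => xL - xf n t)).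
    exact (ex_derive_minus (fun _ => xL) (xf n) t0 (ex_derive_const xL t0) (ex_intro _ _ (xf_der n t0 Hn0 HcB0 Hct0))).
    lra. }
  assert (Hloc2 : locally t0 (fun t => 0 < 2 * (sin t / cos t) - sin (Bf n t) / cos (Bf n t))).
  { apply loc_pos. apply (ex_derive_continuous (K:=R_AbsRing) (fun t => 2 * (sin t / cos t) - sin (Bf n t) / cos (Bf n t))).
    revert HcB0. unfold Bf. intro HcB0. auto_derive. unfold Rminus in HcB0. split; lra.
    unfold Bf. replace (t0 + INR n * (t0 - t0)) with t0 by ring.
    assert (0 < tan t0) by (apply tan_gt_0; unfold t0; lra). unfold tan in *. lra. }
  destruct (filter_and _ _ Hloc1 Hloc2) as [eps Heps].
  assert (Heps' : forall t, Rabs (t - t0) < eps -> 0 < xL - xf n t /\ 0 < 2 * tan t - tan (Bf n t)).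
  { intros t Ht. apply Heps. exact Ht. }
  clear Heps.
  pose proof (cond_pos eps) as Hep.
  set (thmax := t0 + Rmin (eps/2) (1/(2*INR n))).
  assert (Hm1 : 0 < Rmin (eps/2) (1/(2*INR n))) by (apply Rmin_pos; [lra | apply Rdiv_lt_0_compat; lra]).
  assert (Hm2 : Rmin (eps/2) (1/(2*INR n)) <= eps/2) by apply Rmin_l.
  assert (Hm3 : Rmin (eps/2) (1/(2*INR n)) <= 1/(2*INR n)) by apply Rmin_r.
  assert (Htm1 : t0 < thmax) by (unfold thmax; lra).
  assert (Htm2 : thmax <= Tf n) by (unfold thmax, Tf; lra).
  set (a := xf n thmax).
  assert (Ha1 : 1 < a) by (rewrite <- Hx0; apply strict_inc; auto).
  assert (Ha2 : a < xL).
  { destruct (Heps' thmax) as [H _]. rewrite Rabs_right; unfold thmax; lra. unfold a; lra. }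
  destruct (Ranalysis5.IVT_interv (fun s => a - xf n s) (Lf n) t0) as [thmin [Hth1 Hth2]].
  { intros s Hs. apply (continuity_pt_minus (fct_cte a) (xf n)).
    apply continuity_pt_const. intros u v; reflexivity. apply xf_cont; auto. lra. }
  { exact HLt. } { cbv beta. unfold xL in *. lra. } { cbv beta. lra. }
  assert (Hxmin : xf n thmin = a) by lra. clear Hth2.
  assert (Hrng : forall t, thmin <= t <= thmax -> Lf n <= t <= Tf n) by (intros; lra).
  exists a, (rf n thmax * sin thmax), (rf n t0 * sin t0), (thh n), thmin, t0, thmax, (rf n).
  split; [exact Ha1|]. split; [lra|]. split; [exact Htm1|].
  split.
  { intros t Ht. destruct (range n t hn (Hrng t Ht)) as [_ [_ [Hc _]]].
    split; [apply rf_pos|]. split; eexists; [apply rf_der | apply rf_der2]; auto. }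
  split.
  { exists (Mf n ^ n). intros t Ht. destruct (range n t hn (Hrng t Ht)) as [_ [_ [Hc _]]].
    unfold level_fun, cexp_i, polar_pt. apply level_const; auto. }
  split.
  { intros t Ht. destruct (range n t hn (Hrng t Ht)) as [_ [_ [Hc _]]].
    unfold stationary_ode. rewrite (is_derive_unique _ _ _ (rf_der2 n t Hn0 Hc)).
    rewrite rf_Derive by auto. unfold tan. apply ode_alg; auto using rf_pos.
    pose proof (sin2_cos2 (Bf n t)) as HH; unfold Rsqr in HH; exact HH. }
  split; [exact Hx0|]. split; [reflexivity|].
  assert (HD0 : Derive (rf n) t0 = rf n t0 * tan t0).
  { rewrite rf_Derive by auto. unfold Bf. replace (t0 + INR n * (t0 - t0)) with t0 by ring. reflexivity. }
  split. { rewrite HD0. unfold tan. field. lra. }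
  split.
  { rewrite HD0. assert (0 < tan t0) by (apply tan_gt_0; unfold t0; lra).
    assert (0 < sin t0) by (apply sin_gt_0; unfold t0; lra). pose proof (rf_pos n t0).
    assert (0 < rf n t0 * tan t0 * sin t0) by (apply Rmult_lt_0_compat; [apply Rmult_lt_0_compat|]; auto).
    assert (0 < rf n t0 * cos t0) by (apply Rmult_lt_0_compat; auto). lra. }
  split; [reflexivity|]. split; [reflexivity|]. split; [exact Hxmin|].
  intros t Ht. destruct (range n t hn (Hrng t Ht)) as [HB [Ht' [Hc Hct]]].
  pose proof (rf_pos n t) as Hr.
  split.
  { change (1 <= xf n t <= a). rewrite <- Hx0.
    destruct (Rle_or_lt t t0) as [Hq|Hq].
    - split. apply mono_dec; auto; lra. rewrite <- Hxmin. apply mono_dec; auto; lra.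
    - split. apply mono_inc; auto; lra. apply mono_inc; auto; lra. }
  rewrite rf_Derive by auto.
  split.
  { apply Rmult_le_pos; [lra|]. destruct (Rle_lt_or_eq_dec _ _ (proj1 HB)) as [H|H].
    - left; apply tan_gt_0; lra.
    - rewrite <- H, tan_0. lra. }
  replace (rf n t * tan (Bf n t) / rf n t) with (tan (Bf n t)) by (field; lra).
  assert (0 < tan t) by (apply tan_gt_0; lra).
  destruct (tan_cmp n t hn (Hrng t Ht)) as [T1 _].
  destruct (Rle_or_lt t t0) as [Hq|Hq].
  - destruct (Rle_lt_or_eq_dec _ _ Hq) as [H'|H'].
    + specialize (T1 H'). lra.
    + subst t. unfold Bf. replace (t0 + INR n * (t0 - t0)) with t0 by ring. lra.
  - destruct (Heps' t) as [_ H2]. rewrite Rabs_right; unfold thmax in *; lra. lra.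
Qed.
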